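(* Let $d\ge 1$, $1\le r\le d$, and let $S(\cdot; r, d):\mathbb{R}^d\to\mathbb{R}$ be $S(x;r,d)=\frac{1}{\binom dr}\sum_{j=1}^{\binom dr} s(x;C(j,r,d))$. If $f_1,\dots,f_K$ is any order-$r$ functional decomposition of $S(\cdot; r, d)$, then $K \ge \binom{d}{r}$.
   Context: For $x\in\mathbb{R}^d$ and nonempty $A\subseteq\{1,\dots,d\}$, $s(x;A)=\max\{x_j:j\in A\}$; $C(k,r,d)$ is the $k$-th $r$-element subset of $\{1,\dots,d\}$ in lexicographic order. A function $f:\mathbb{R}^d\to\mathbb{R}$ has an order-$r$ functional decomposition $f_1,\dots,f_K$ if $f=\sum_{k=1}^K f_k$ and each $f_k:\mathbb{R}^d\to\mathbb{R}$ is a function of only $r$ of the coordinates (i.e. depends only on the coordinates indexed by some $r$-element subset of $\{1,\dots,d\}$). *)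

(* Defs.v *)
From mathcomp Require Import all_boot all_order all_algebra.
From mathcomp Require Import reals.
Set Implicit Arguments. Unset Strict Implicit. Unset Printing Implicit Defensive.
Import Order.TTheory GRing.Theory Num.Theory.
Local Open Scope ring_scope.

(* s(x;A) = max { x_j : j in A } for nonempty A (value 0 on the empty set,
   which is never used). Points of R^d are functions 'I_d -> R. *)
Definition smax (R : realType) (d : nat) (x : 'I_d -> R) (A : {set 'I_d}) : R :=
  match [pick j in A] with
  | Some j0 => \big[Num.max/x j0]_(j in A) x j
  | None => 0
  end.

(* S(x;r,d) = (1 / binom(d,r)) * sum over all r-element subsets A of s(x;A).
   (Summing over C(1,r,d),...,C(binom d r,r,d) in lexicographic order is the
   same as summing over all r-element subsets.) *)
Definition Sfun (R : realType) (r d : nat) (x : 'I_d -> R) : R :=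
  ('C(d, r))%:R^-1 * \sum_(A : {set 'I_d} | #|A| == r) smax x A.

Definition depends_only_on (R : realType) (d : nat)
    (f : ('I_d -> R) -> R) (B : {set 'I_d}) : Prop :=
  forall x y : 'I_d -> R, (forall j, j \in B -> x j = y j) -> f x = f y.

Definition order_decomposition (R : realType) (d r K : nat)
    (g : ('I_d -> R) -> R) (f : 'I_K -> ('I_d -> R) -> R) : Prop :=
  (forall x, g x = \sum_(k < K) f k x) /\
  (forall k, exists B : {set 'I_d}, #|B| = r /\ depends_only_on (f k) B).

Arguments Sfun : clear implicits.
Arguments order_decomposition : clear implicits.

(* Main.v *)
Require Import Defs.
From mathcomp Require Import all_boot all_order all_algebra.
From mathcomp Require Import reals.
From Stdlib Require Import ClassicalEpsilon.
Set Implicit Arguments. Unset Strict Implicit. Unset Printing Implicit Defensive.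
Import Order.TTheory GRing.Theory Num.Theory.
Local Open Scope ring_scope.
Section Aux.
Variables (R : realType) (d : nat).
Definition ind (T : {set 'I_d}) : 'I_d -> R := fun j => if j \in T then 1 else 0.
Definition sgn (A T : {set 'I_d}) : R := (-1) ^+ #|A :\: T|.
Definition Delta (A : {set 'I_d}) (g : ('I_d -> R) -> R) : R :=
  \sum_(T : {set 'I_d} | T \subset A) sgn A T * g (ind T).
Lemma Delta_dep (A B : {set 'I_d}) (i : 'I_d) g :
  i \in A -> i \notin B -> depends_only_on g B -> Delta A g = 0.
Proof.
move=> iA iB hg; rewrite /Delta (bigID (fun T : {set 'I_d} => i \in T) (fun T => T \subset A)) /=.
rewrite (reindex_onto (fun T => i |: T) (fun T => T :\ i)); last first.
  by move=> T /andP [_ iT]; rewrite setD1K.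
set F := fun j => sgn A (i |: j) * g (ind (i |: j)).
have E : \sum_(j : {set 'I_d} | (i |: j \subset A) && (i \in i |: j) && ((i |: j) :\ i == j)) F j
   = \sum_(j : {set 'I_d} | (j \subset A) && (i \notin j)) F j.
  apply: eq_bigl => T; rewrite setU11 /= subUset sub1set iA /= andbT.
  case iT: (i \in T) => /=.
    have -> : ((i |: T) :\ i == T) = false.
      by apply/eqP => h; move: (setD11 i (i |: T)); rewrite h iT.
    by [].
  by rewrite setU1K ?negbT // eqxx.
rewrite E -big_split /=; apply: big1 => T /andP [TA iT].
rewrite /F.
have -> : g (ind (i |: T)) = g (ind T).
  apply: hg => j jB; rewrite /ind in_setU1.
  by case: eqP => [ji|] //=; rewrite -ji jB in iB.
rewrite /sgn -mulrDl.
have -> : A :\: T = i |: (A :\: (i |: T)).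
  apply/setP => j; rewrite !inE; case: eqP => [->|] //=; by rewrite iA (negbTE iT).
rewrite cardsU1 !inE eqxx /= exprS.
by rewrite mulN1r subrr mul0r.
Qed.

Lemma smax_dep (A : {set 'I_d}) : depends_only_on (fun x : 'I_d -> R => smax x A) A.
Proof.
move=> x y hxy; rewrite /smax; case: pickP => // j0 hj0.
rewrite hxy //; apply: eq_bigr => j jA; exact: hxy.
Qed.

Lemma Delta_ext (A : {set 'I_d}) g h : (forall x, g x = h x) -> Delta A g = Delta A h.
Proof. by move=> e; apply: eq_bigr => T _; rewrite e. Qed.

Lemma Delta_sum (A : {set 'I_d}) K (h : 'I_K -> ('I_d -> R) -> R) :
  Delta A (fun x => \sum_(k < K) h k x) = \sum_(k < K) Delta A (h k).
Proof.
rewrite /Delta exchange_big /=; apply: eq_bigr => T _; by rewrite mulr_sumr.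
Qed.

Lemma Delta_sum_set (A : {set 'I_d}) (P : pred {set 'I_d}) (h : {set 'I_d} -> ('I_d -> R) -> R) :
  Delta A (fun x => \sum_(S | P S) h S x) = \sum_(S | P S) Delta A (h S).
Proof.
rewrite /Delta exchange_big /=; apply: eq_bigr => T _; by rewrite mulr_sumr.
Qed.

Lemma Delta_scale (A : {set 'I_d}) c h : Delta A (fun x => c * h x) = c * Delta A h.
Proof.
rewrite /Delta mulr_sumr; apply: eq_bigr => T _; by rewrite mulrCA.
Qed.

Lemma Delta_const (A : {set 'I_d}) : A != set0 -> Delta A (fun _ => 1) = 0.
Proof.
case/set0Pn => i iA; apply: (@Delta_dep A set0 i) => //; first by rewrite inE.
Qed.

Lemma smax_ind0 (A : {set 'I_d}) : smax (ind set0) A = 0.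
Proof.
rewrite /smax; case: pickP => // j0 _.
apply: (big_ind (fun v => v = 0)) => //; first by rewrite /ind inE.
  by move=> a b -> ->; rewrite maxxx.
by move=> j _; rewrite /ind inE.
Qed.

Lemma smax_ind1 (A T : {set 'I_d}) : T \subset A -> T != set0 -> smax (ind T) A = 1.
Proof.
move=> TA /set0Pn [t tT]; have tA : t \in A by apply: (subsetP TA).
rewrite /smax; case: pickP => [j0 hj0|]; last by move/(_ t); rewrite tA.
apply/le_anti/andP; split.
  apply: (big_ind (fun v => v <= 1)).
  - by rewrite /ind; case: ifP.
  - by move=> a b ha hb; rewrite ge_max ha hb.
  - by move=> j _; rewrite /ind; case: ifP.
rewrite (bigD1 t) //= le_max /ind tT lexx //.
Qed.

Lemma Delta_smax (A : {set 'I_d}) : A != set0 -> Delta A (fun x => smax x A) = - sgn A set0.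
Proof.
move=> A0; have := Delta_const A0; rewrite /Delta.
rewrite (bigD1 set0) ?sub0set //= mulr1 => /eqP; rewrite addrC addr_eq0 => /eqP H.
rewrite (bigD1 set0) ?sub0set //= smax_ind0 mulr0 add0r -H.
apply: eq_bigr => T /andP [TA T0].
by rewrite smax_ind1 // mulr1.
Qed.

End Aux.

Theorem theorem3 (R : realType) (d r K : nat) (hd : (1 <= d)%N)
    (hr1 : (1 <= r)%N) (hrd : (r <= d)%N)
    (f : 'I_K -> ('I_d -> R) -> R) :
  order_decomposition R d r K (Sfun R r d) f -> ('C(d, r) <= K)%N.
Proof.
move=> [hsum hdep].
pose B k := proj1_sig (constructive_indefinite_description _ (hdep k)).
have hB k : #|B k| = r /\ depends_only_on (f k) (B k)
  := proj2_sig (constructive_indefinite_description _ (hdep k)).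
have cover : forall A : {set 'I_d}, #|A| = r -> exists k, B k = A.
  move=> A hA.
  case: (pickP [pred k | B k == A]) => [k /eqP hk|hnone]; first by exists k.
  exfalso.
  have A0 : A != set0 by apply/set0Pn; apply/card_gt0P; rewrite hA.
  have E1 : Delta A (Sfun R r d) = 0.
    rewrite (Delta_ext _ hsum) Delta_sum; apply: big1 => k _.
    have hk : ~~ (A \subset B k).
      apply/negP => sub; move: (hnone k) => /=; suff -> : B k == A by [].
      by rewrite eq_sym eqEcard sub (proj1 (hB k)) hA leqnn.
    case/subsetPn: hk => i iA iB.
    exact: (Delta_dep iA iB (proj2 (hB k))).
  have E2 : Delta A (Sfun R r d) = ('C(d, r))%:R^-1 * - sgn R A set0.
    rewrite /Sfun Delta_scale Delta_sum_set; congr (_ * _).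
    rewrite (bigD1 A) ?hA ?eqxx //= Delta_smax // big1 ?addr0 // => S /andP [/eqP hS SA].
    have hk : ~~ (A \subset S).
      apply/negP => sub; move: SA; suff -> : S == A by [].
      by rewrite eq_sym eqEcard sub hS hA leqnn.
    case/subsetPn: hk => i iA iS.
    apply: (Delta_dep iA iS); exact: smax_dep.
  move: E1; rewrite E2 => /eqP; rewrite mulf_eq0 invr_eq0 pnatr_eq0 oppr_eq0.
  have -> : ('C(d, r) == 0%N) = false by apply/negbTE; rewrite -lt0n bin_gt0.
  by rewrite /sgn expf_eq0 oppr_eq0 oner_eq0 andbF.
have -> : 'C(d, r) = #|[set A : {set 'I_d} | #|A| == r]| by rewrite card_draws card_ord.
apply: (@leq_trans #|[set B k | k in 'I_K]|); last first.
  by rewrite -[X in (_ <= X)%N](card_ord K); apply: leq_imset_card.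
apply: subset_leq_card; apply/subsetP => A; rewrite inE => /eqP /cover [k <-].
by apply: imset_f.
Qed.
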